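(* Let $a, b$ be integers with $0 < a \le b$ and let $L_{a,b} = \{C_{i,1} : 1 \le i \le a+1\} \cup \{C_{1,j} : 1 < j \le b+1\}$, of size $n = a+b+1$. Then on the $n \times n$ board, $2 \le \mathrm{cp}_{\mathrm{free}}(L_{a,b}) \le 5$.
   Context: For integers $i,j$, $C_{i,j}$ denotes the unit square cell in column $i$ and row $j$ of the integer grid (columns numbered left to right, rows numbered top to bottom). A polyomino is a finite set of cells; its size is its number of cells. For a polyomino $\mathcal{P}$ of size $n$ the board is $\mathbb{B} = \{C_{i,j} : 1 \le i,j \le n\}$. The shift of $\mathcal{P}$ by integers $(c,d)$ is $\mathcal{P}+(c,d) = \{C_{x+c,y+d} : C_{x,y} \in \mathcal{P}\}$. The rotations of $L_{a,b}$ by $90^\circ, 180^\circ, 270^\circ$ clockwise are $LR_{a,b} = \{C_{i,1} : 1 \le i \le b+1\} \cup \{C_{b+1,j} : 1 \le j \le a+1\}$, $LR^2_{a,b} = \{C_{i,b+1} : 1 \le i \le a+1\} \cup \{C_{a+1,j} : 1 \le j \le b+1\}$, $LR^3_{a,b} = \{C_{i,a+1} : 1 \le i \le b+1\} \cup \{C_{1,j} : 1 \le j \le a+1\}$ (reflections are not allowed). A free copy of $L_{a,b}$ is any shift of one of these four. A set of polyominoes is a valid arrangement if each is contained in $\mathbb{B}$ and they are pairwise disjoint. A free packing of $\mathcal{P}$ is a set of free copies of $\mathcal{P}$ forming a valid arrangement such that adding any further free copy of $\mathcal{P}$ yields an invalid arrangement. The clumsy free packing number $\mathrm{cp}_{\mathrm{free}}(\mathcal{P})$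 is the minimum number of polyominoes in a free packing of $\mathcal{P}$ on the $n \times n$ board. *)

(* Defs.v *)
From Stdlib Require Import ZArith List.
Import ListNotations.
Open Scope Z_scope.

(* A cell C_{i,j} (column i, row j) is the pair (i, j). *)
Definition cell := (Z * Z)%type.
Definition poly := cell -> Prop.

(* L_{a,b} and its clockwise rotations, transcribed from the paper. *)
Definition Lab (a b : Z) : poly := fun z =>
  let (i, j) := z in (j = 1 /\ 1 <= i <= a + 1) \/ (i = 1 /\ 1 < j <= b + 1).
Definition LR (a b : Z) : poly := fun z =>
  let (i, j) := z in (j = 1 /\ 1 <= i <= b + 1) \/ (i = b + 1 /\ 1 <= j <= a + 1).
Definition LR2 (a b : Z) : poly := fun z =>
  let (i, j) := z in (j = b + 1 /\ 1 <= i <= a + 1) \/ (i = a + 1 /\ 1 <= j <= b + 1).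
Definition LR3 (a b : Z) : poly := fun z =>
  let (i, j) := z in (j = a + 1 /\ 1 <= i <= b + 1) \/ (i = 1 /\ 1 <= j <= a + 1).

Definition shift (P : poly) (c d : Z) : poly := fun z =>
  let (u, v) := z in P (u - c, v - d).

Definition free_copy (a b : Z) (Q : poly) : Prop :=
  exists (R : poly) (c d : Z),
    (R = Lab a b \/ R = LR a b \/ R = LR2 a b \/ R = LR3 a b) /\
    (forall z, Q z <-> shift R c d z).

Definition board (n : Z) : poly := fun z =>
  let (i, j) := z in 1 <= i <= n /\ 1 <= j <= n.

Definition empty_poly : poly := fun _ => False.

Definition valid_arrangement (n : Z) (Ps : list poly) : Prop :=
  (forall P, In P Ps -> forall z, P z -> board n z) /\
  (forall i j : nat, i <> j -> (i < length Ps)%nat -> (j < length Ps)%nat ->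
     forall z, ~ (nth i Ps empty_poly z /\ nth j Ps empty_poly z)).

Definition free_packing (a b n : Z) (Ps : list poly) : Prop :=
  Forall (free_copy a b) Ps /\
  valid_arrangement n Ps /\
  (forall Q, free_copy a b Q -> ~ valid_arrangement n (Ps ++ [Q])).

Definition is_cp_free (a b n : Z) (k : nat) : Prop :=
  (exists Ps, free_packing a b n Ps /\ length Ps = k) /\
  (forall Ps, free_packing a b n Ps -> (k <= length Ps)%nat).

(* Main.v *)
Require Import Defs.
From Stdlib Require Import ZArith List Lia Classical.
Import ListNotations.
Open Scope Z_scope.

Definition isrot (a b : Z) (R : poly) : Prop :=
  R = Lab a b \/ R = LR a b \/ R = LR2 a b \/ R = LR3 a b.

Ltac unf := cbv beta iota delta [isrot Defs.shift Lab LR LR2 LR3 board] in *.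

Lemma maximal_of (a b : Z) (Ps : list poly) :
  (forall (R : poly) (c d : Z), isrot a b R ->
     (forall z, Defs.shift R c d z -> board (a+b+1) z) ->
     (forall P, In P Ps -> forall z, ~ (P z /\ Defs.shift R c d z)) -> False) ->
  forall Q, free_copy a b Q -> ~ valid_arrangement (a+b+1) (Ps ++ [Q]).
Proof.
  intros H Q [R [c [d [HR HQ]]]] [Hb Hd].
  apply (H R c d HR).
  - intros z Hz. apply (Hb Q). apply in_or_app; right; left; reflexivity. apply HQ; exact Hz.
  - intros P HP z [HPz Hz].
    destruct (In_nth _ _ empty_poly HP) as [i [Hi Hni]].
    assert (Hl : length (Ps ++ [Q]) = S (length Ps)) by (rewrite length_app; simpl; lia).
    apply (Hd i (length Ps) ltac:(lia) ltac:(lia) ltac:(lia) z).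
    rewrite app_nth1 by lia. rewrite nth_middle.
    rewrite Hni. split; [exact HPz | apply HQ; exact Hz].
Qed.

Lemma fc_shift a b R c d : isrot a b R -> free_copy a b (Defs.shift R c d).
Proof. intros HR. exists R, c, d. split; [exact HR | tauto]. Qed.

Lemma min_exists (P : nat -> Prop) n : P n -> exists k, P k /\ forall m, P m -> (k <= m)%nat.
Proof.
  revert P. induction n as [n IH] using (well_founded_induction lt_wf). intros P Hn.
  destruct (classic (exists m, (m < n)%nat /\ P m)) as [[m [Hm HPm]]|Hno].
  - exact (IH m Hm P HPm).
  - exists n. split; [exact Hn|]. intros m Hm.
    destruct (Nat.le_gt_cases n m) as [|Hlt]; [assumption|].
    exfalso. apply Hno. exists m. auto.
Qed.

Lemma valid_two n P Q :
  (forall z, P z -> board n z) -> (forall z, Q z -> board n z) ->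
  (forall z, ~ (P z /\ Q z)) -> valid_arrangement n ([P] ++ [Q]).
Proof.
  intros HP HQ HD. split.
  - intros X HX z Hz. simpl in HX. destruct HX as [<-|[<-|[]]]; auto.
  - intros i j Hij Hi Hj z. simpl in Hi, Hj.
    destruct i as [|[|i]]; destruct j as [|[|j]]; simpl; try lia.
    + exact (HD z).
    + intros [h1 h2]. exact (HD z (conj h2 h1)).
Qed.
Definition famA (a b : Z) : list poly := [(Defs.shift (Lab a b) (a - 1) (0)); (Defs.shift (Lab a b) (a) (a))].

Lemma famA_fc (a b : Z) (h0 : 0 < a) (h1 : a = b) : Forall (free_copy a b) (famA a b).
Proof. unfold famA. repeat constructor; apply fc_shift; unfold isrot; tauto. Qed.

Lemma famA_valid (a b : Z) (h0 : 0 < a) (h1 : a = b) : valid_arrangement (a+b+1) (famA a b).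
Proof.
  split.
  - intros P HP [x y] Hz. unfold famA in HP. simpl in HP.
    repeat (destruct HP as [<-|HP]; [unf; lia|]); destruct HP.
  - intros i j Hij Hi Hj [x y]. unfold famA in *. simpl in Hi, Hj.
    destruct i as [|[|i]]; try lia; destruct j as [|[|j]]; try lia; simpl; unf; lia.
Qed.

Lemma famA_max (a b : Z) (h0 : 0 < a) (h1 : a = b) : forall (R : poly) (c d : Z), isrot a b R ->
  (forall z, Defs.shift R c d z -> board (a+b+1) z) ->
  (forall P, In P (famA a b) -> forall z, ~ (P z /\ Defs.shift R c d z)) -> False.
Proof.
  intros R c d HR Hb Hd. unfold famA in Hd.
  destruct HR as [-> | [-> | [-> | ->]]].
  - pose proof (Hb ((c + 1), (d + 1)) ltac:(unf; lia)) as B0.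
    pose proof (Hb ((a + c + 1), (d + 1)) ltac:(unf; lia)) as B1.
    pose proof (Hb ((c + 1), (d + 1)) ltac:(unf; lia)) as B2.
    pose proof (Hb ((c + 1), (b + d + 1)) ltac:(unf; lia)) as B3.
    pose proof (Hd _ ltac:(simpl; do 0 right; left; reflexivity) ((a), (d + 1))) as W0.
    pose proof (Hd _ ltac:(simpl; do 1 right; left; reflexivity) ((c + 1), (b + d + 1))) as W1.
    clear Hb Hd. unf. lia.
  - pose proof (Hb ((c + 1), (d + 1)) ltac:(unf; lia)) as B0.
    pose proof (Hb ((b + c + 1), (d + 1)) ltac:(unf; lia)) as B1.
    pose proof (Hb ((b + c + 1), (d + 1)) ltac:(unf; lia)) as B2.
    pose proof (Hb ((b + c + 1), (a + d + 1)) ltac:(unf; lia)) as B3.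
    pose proof (Hd _ ltac:(simpl; do 1 right; left; reflexivity) ((b + c + 1), (a + 1))) as W0.
    clear Hb Hd. unf. lia.
  - pose proof (Hb ((c + 1), (b + d + 1)) ltac:(unf; lia)) as B0.
    pose proof (Hb ((a + c + 1), (b + d + 1)) ltac:(unf; lia)) as B1.
    pose proof (Hb ((a + c + 1), (d + 1)) ltac:(unf; lia)) as B2.
    pose proof (Hb ((a + c + 1), (b + d + 1)) ltac:(unf; lia)) as B3.
    pose proof (Hd _ ltac:(simpl; do 1 right; left; reflexivity) ((a + c + 1), (a + 1))) as W0.
    clear Hb Hd. unf. lia.
  - pose proof (Hb ((c + 1), (a + d + 1)) ltac:(unf; lia)) as B0.
    pose proof (Hb ((b + c + 1), (a + d + 1)) ltac:(unf; lia)) as B1.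
    pose proof (Hb ((c + 1), (d + 1)) ltac:(unf; lia)) as B2.
    pose proof (Hb ((c + 1), (a + d + 1)) ltac:(unf; lia)) as B3.
    pose proof (Hd _ ltac:(simpl; do 1 right; left; reflexivity) ((a + 1), (a + d + 1))) as W0.
    clear Hb Hd. unf. lia.
Qed.

Lemma famA_packing (a b : Z) (h0 : 0 < a) (h1 : a = b) : free_packing a b (a+b+1) (famA a b).
Proof.
  split; [apply famA_fc; assumption|]. split; [apply famA_valid; assumption|].
  apply maximal_of. apply famA_max; assumption.
Qed.

Definition famB (a b : Z) : list poly := [(Defs.shift (Lab a b) (b) (a)); (Defs.shift (LR2 a b) (-a + b - 1) (1)); (Defs.shift (Lab a b) (a - 1) (0))].

Lemma famB_fc (a b : Z) (h0 : 0 < a) (h1 : a < b) (h2 : b <= 2*a) : Forall (free_copy a b) (famB a b).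
Proof. unfold famB. repeat constructor; apply fc_shift; unfold isrot; tauto. Qed.

Lemma famB_valid (a b : Z) (h0 : 0 < a) (h1 : a < b) (h2 : b <= 2*a) : valid_arrangement (a+b+1) (famB a b).
Proof.
  split.
  - intros P HP [x y] Hz. unfold famB in HP. simpl in HP.
    repeat (destruct HP as [<-|HP]; [unf; lia|]); destruct HP.
  - intros i j Hij Hi Hj [x y]. unfold famB in *. simpl in Hi, Hj.
    destruct i as [|[|[|i]]]; try lia; destruct j as [|[|[|j]]]; try lia; simpl; unf; lia.
Qed.

Lemma famB_max (a b : Z) (h0 : 0 < a) (h1 : a < b) (h2 : b <= 2*a) : forall (R : poly) (c d : Z), isrot a b R ->
  (forall z, Defs.shift R c d z -> board (a+b+1) z) ->
  (forall P, In P (famB a b) -> forall z, ~ (P z /\ Defs.shift R c d z)) -> False.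
Proof.
  intros R c d HR Hb Hd. unfold famB in Hd.
  destruct HR as [-> | [-> | [-> | ->]]].
  - pose proof (Hb ((c + 1), (d + 1)) ltac:(unf; lia)) as B0.
    pose proof (Hb ((a + c + 1), (d + 1)) ltac:(unf; lia)) as B1.
    pose proof (Hb ((c + 1), (d + 1)) ltac:(unf; lia)) as B2.
    pose proof (Hb ((c + 1), (b + d + 1)) ltac:(unf; lia)) as B3.
    pose proof (Hd _ ltac:(simpl; do 1 right; left; reflexivity) ((c + 1), (b + 2))) as W0.
    pose proof (Hd _ ltac:(simpl; do 2 right; left; reflexivity) ((a), (d + 1))) as W1.
    pose proof (Hd _ ltac:(simpl; do 0 right; left; reflexivity) ((c + 1), (b + d + 1))) as W2.
    pose proof (Hd _ ltac:(simpl; do 2 right; left; reflexivity) ((c + 1), (d + 1))) as W3.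
    clear Hb Hd. unf. lia.
  - pose proof (Hb ((c + 1), (d + 1)) ltac:(unf; lia)) as B0.
    pose proof (Hb ((b + c + 1), (d + 1)) ltac:(unf; lia)) as B1.
    pose proof (Hb ((b + c + 1), (d + 1)) ltac:(unf; lia)) as B2.
    pose proof (Hb ((b + c + 1), (a + d + 1)) ltac:(unf; lia)) as B3.
    pose proof (Hd _ ltac:(simpl; do 1 right; left; reflexivity) ((b), (d + 1))) as W0.
    pose proof (Hd _ ltac:(simpl; do 0 right; left; reflexivity) ((b + c + 1), (a + d + 1))) as W1.
    clear Hb Hd. unf. lia.
  - pose proof (Hb ((c + 1), (b + d + 1)) ltac:(unf; lia)) as B0.
    pose proof (Hb ((a + c + 1), (b + d + 1)) ltac:(unf; lia)) as B1.
    pose proof (Hb ((a + c + 1), (d + 1)) ltac:(unf; lia)) as B2.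
    pose proof (Hb ((a + c + 1), (b + d + 1)) ltac:(unf; lia)) as B3.
    pose proof (Hd _ ltac:(simpl; do 0 right; left; reflexivity) ((a + c + 1), (a + 1))) as W0.
    pose proof (Hd _ ltac:(simpl; do 1 right; left; reflexivity) ((a + c + 1), (b + 2))) as W1.
    pose proof (Hd _ ltac:(simpl; do 2 right; left; reflexivity) ((a + c + 1), (d + 1))) as W2.
    clear Hb Hd. unf. lia.
  - pose proof (Hb ((c + 1), (a + d + 1)) ltac:(unf; lia)) as B0.
    pose proof (Hb ((b + c + 1), (a + d + 1)) ltac:(unf; lia)) as B1.
    pose proof (Hb ((c + 1), (d + 1)) ltac:(unf; lia)) as B2.
    pose proof (Hb ((c + 1), (a + d + 1)) ltac:(unf; lia)) as B3.
    pose proof (Hd _ ltac:(simpl; do 0 right; left; reflexivity) ((b + 1), (a + d + 1))) as W0.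
    clear Hb Hd. unf. lia.
Qed.

Lemma famB_packing (a b : Z) (h0 : 0 < a) (h1 : a < b) (h2 : b <= 2*a) : free_packing a b (a+b+1) (famB a b).
Proof.
  split; [apply famB_fc; assumption|]. split; [apply famB_valid; assumption|].
  apply maximal_of. apply famB_max; assumption.
Qed.

Definition famC (a b : Z) : list poly := [(Defs.shift (LR3 a b) (a) (-a + b + 1)); (Defs.shift (Lab a b) (a - 1) (a)); (Defs.shift (LR a b) (0) (a - 1)); (Defs.shift (LR2 a b) (-a + b + 1) (0))].

Lemma famC_fc (a b : Z) (h0 : 0 < a) (h1 : 2*a <= b) : Forall (free_copy a b) (famC a b).
Proof. unfold famC. repeat constructor; apply fc_shift; unfold isrot; tauto. Qed.

Lemma famC_valid (a b : Z) (h0 : 0 < a) (h1 : 2*a <= b) : valid_arrangement (a+b+1) (famC a b).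
Proof.
  split.
  - intros P HP [x y] Hz. unfold famC in HP. simpl in HP.
    repeat (destruct HP as [<-|HP]; [unf; lia|]); destruct HP.
  - intros i j Hij Hi Hj [x y]. unfold famC in *. simpl in Hi, Hj.
    destruct i as [|[|[|[|i]]]]; try lia; destruct j as [|[|[|[|j]]]]; try lia; simpl; unf; lia.
Qed.

Lemma famC_max (a b : Z) (h0 : 0 < a) (h1 : 2*a <= b) : forall (R : poly) (c d : Z), isrot a b R ->
  (forall z, Defs.shift R c d z -> board (a+b+1) z) ->
  (forall P, In P (famC a b) -> forall z, ~ (P z /\ Defs.shift R c d z)) -> False.
Proof.
  intros R c d HR Hb Hd. unfold famC in Hd.
  destruct HR as [-> | [-> | [-> | ->]]].
  - pose proof (Hb ((c + 1), (d + 1)) ltac:(unf; lia)) as B0.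
    pose proof (Hb ((a + c + 1), (d + 1)) ltac:(unf; lia)) as B1.
    pose proof (Hb ((c + 1), (d + 1)) ltac:(unf; lia)) as B2.
    pose proof (Hb ((c + 1), (b + d + 1)) ltac:(unf; lia)) as B3.
    pose proof (Hd _ ltac:(simpl; do 2 right; left; reflexivity) ((c + 1), (a))) as W0.
    pose proof (Hd _ ltac:(simpl; do 0 right; left; reflexivity) ((c + 1), (b + 2))) as W1.
    pose proof (Hd _ ltac:(simpl; do 1 right; left; reflexivity) ((a + c + 1), (d + 1))) as W2.
    clear Hb Hd. unf. lia.
  - pose proof (Hb ((c + 1), (d + 1)) ltac:(unf; lia)) as B0.
    pose proof (Hb ((b + c + 1), (d + 1)) ltac:(unf; lia)) as B1.
    pose proof (Hb ((b + c + 1), (d + 1)) ltac:(unf; lia)) as B2.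
    pose proof (Hb ((b + c + 1), (a + d + 1)) ltac:(unf; lia)) as B3.
    pose proof (Hd _ ltac:(simpl; do 3 right; left; reflexivity) ((b + 2), (d + 1))) as W0.
    pose proof (Hd _ ltac:(simpl; do 1 right; left; reflexivity) ((a), (d + 1))) as W1.
    pose proof (Hd _ ltac:(simpl; do 2 right; left; reflexivity) ((b + c + 1), (a + d + 1))) as W2.
    clear Hb Hd. unf. lia.
  - pose proof (Hb ((c + 1), (b + d + 1)) ltac:(unf; lia)) as B0.
    pose proof (Hb ((a + c + 1), (b + d + 1)) ltac:(unf; lia)) as B1.
    pose proof (Hb ((a + c + 1), (d + 1)) ltac:(unf; lia)) as B2.
    pose proof (Hb ((a + c + 1), (b + d + 1)) ltac:(unf; lia)) as B3.
    pose proof (Hd _ ltac:(simpl; do 0 right; left; reflexivity) ((a + c + 1), (b + 2))) as W0.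
    pose proof (Hd _ ltac:(simpl; do 2 right; left; reflexivity) ((a + c + 1), (a))) as W1.
    pose proof (Hd _ ltac:(simpl; do 3 right; left; reflexivity) ((c + 1), (b + d + 1))) as W2.
    clear Hb Hd. unf. lia.
  - pose proof (Hb ((c + 1), (a + d + 1)) ltac:(unf; lia)) as B0.
    pose proof (Hb ((b + c + 1), (a + d + 1)) ltac:(unf; lia)) as B1.
    pose proof (Hb ((c + 1), (d + 1)) ltac:(unf; lia)) as B2.
    pose proof (Hb ((c + 1), (a + d + 1)) ltac:(unf; lia)) as B3.
    pose proof (Hd _ ltac:(simpl; do 1 right; left; reflexivity) ((a), (a + d + 1))) as W0.
    pose proof (Hd _ ltac:(simpl; do 3 right; left; reflexivity) ((b + 2), (a + d + 1))) as W1.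
    pose proof (Hd _ ltac:(simpl; do 0 right; left; reflexivity) ((c + 1), (d + 1))) as W2.
    clear Hb Hd. unf. lia.
Qed.

Lemma famC_packing (a b : Z) (h0 : 0 < a) (h1 : 2*a <= b) : free_packing a b (a+b+1) (famC a b).
Proof.
  split; [apply famC_fc; assumption|]. split; [apply famC_valid; assumption|].
  apply maximal_of. apply famC_max; assumption.
Qed.

Lemma lower (a b : Z) (hab : 0 < a <= b) (Ps : list poly) :
  free_packing a b (a+b+1) Ps -> (2 <= length Ps)%nat.
Proof.
  intros [HF [HV HM]].
  destruct Ps as [|P [|P2 Ps']]; simpl; try lia.
  - exfalso. apply (HM (Defs.shift (Lab a b) 0 0)).
    + apply fc_shift. unfold isrot; tauto.
    + split.
      * intros X HX. simpl in HX. destruct HX as [<-|[]]. intros [x y] Hz. unf. lia.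
      * intros i j Hij Hi Hj. simpl in Hi, Hj. lia.
  - exfalso. inversion HF as [|? ? HFP]; subst.
    destruct HFP as [R [c [d [HR HP]]]].
    assert (Hb : forall z, Defs.shift R c d z -> board (a+b+1) z).
    { intros z Hz. apply (proj1 HV P (or_introl eq_refl)). apply HP. exact Hz. }
    assert (Hcase : forall Q1 Q2 : poly, isrot a b Q1 -> isrot a b Q2 -> forall c1 d1 c2 d2,
       (forall z, Defs.shift Q1 c1 d1 z -> board (a+b+1) z) ->
       (forall z, Defs.shift Q2 c2 d2 z -> board (a+b+1) z) ->
       (forall z1 z2, Defs.shift R c d z1 -> Defs.shift Q1 c1 d1 z1 ->
          Defs.shift R c d z2 -> Defs.shift Q2 c2 d2 z2 -> False) -> False).
    { intros Q1 Q2 HQ1 HQ2 c1 d1 c2 d2 HB1 HB2 Hk.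
      destruct (classic (forall z, ~ (P z /\ Defs.shift Q1 c1 d1 z))) as [D1|D1].
      { apply (HM (Defs.shift Q1 c1 d1)); [apply fc_shift; exact HQ1|].
        apply valid_two; [|exact HB1|exact D1].
        intros z Hz. apply (proj1 HV P (or_introl eq_refl)). exact Hz. }
      destruct (classic (forall z, ~ (P z /\ Defs.shift Q2 c2 d2 z))) as [D2|D2].
      { apply (HM (Defs.shift Q2 c2 d2)); [apply fc_shift; exact HQ2|].
        apply valid_two; [|exact HB2|exact D2].
        intros z Hz. apply (proj1 HV P (or_introl eq_refl)). exact Hz. }
      apply not_all_ex_not in D1 as [z1 D1]. apply NNPP in D1.
      apply not_all_ex_not in D2 as [z2 D2]. apply NNPP in D2.
      destruct D1 as [D1a D1b]. destruct D2 as [D2a D2b].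
      apply (Hk z1 z2); try assumption; apply HP; assumption. }
    destruct HR as [-> | [-> | [-> | ->]]].
    + pose proof (Hb (c+1, d+1) ltac:(unf; lia)) as B0.
      pose proof (Hb (a+c+1, d+1) ltac:(unf; lia)) as B1.
      pose proof (Hb (c+1, b+d+1) ltac:(unf; lia)) as B2.
      apply (Hcase (LR2 a b) (Lab a b) ltac:(unf; tauto) ltac:(unf; tauto) b a (a-1) (a-1));
        [intros [x y] Hz; unf; lia | intros [x y] Hz; unf; lia |].
      intros [x1 y1] [x2 y2]. clear Hcase Hb HM HV HP. unf. lia.
    + pose proof (Hb (c+1, d+1) ltac:(unf; lia)) as B0.
      pose proof (Hb (b+c+1, d+1) ltac:(unf; lia)) as B1.
      pose proof (Hb (b+c+1, a+d+1) ltac:(unf; lia)) as B2.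
      apply (Hcase (LR3 a b) (LR a b) ltac:(unf; tauto) ltac:(unf; tauto) 0 b a (a-1));
        [intros [x y] Hz; unf; lia | intros [x y] Hz; unf; lia |].
      intros [x1 y1] [x2 y2]. clear Hcase Hb HM HV HP. unf. lia.
    + pose proof (Hb (c+1, b+d+1) ltac:(unf; lia)) as B0.
      pose proof (Hb (a+c+1, b+d+1) ltac:(unf; lia)) as B1.
      pose proof (Hb (a+c+1, d+1) ltac:(unf; lia)) as B2.
      apply (Hcase (Lab a b) (LR2 a b) ltac:(unf; tauto) ltac:(unf; tauto) 0 0 a a);
        [intros [x y] Hz; unf; lia | intros [x y] Hz; unf; lia |].
      intros [x1 y1] [x2 y2]. clear Hcase Hb HM HV HP. unf. lia.
    + pose proof (Hb (c+1, a+d+1) ltac:(unf; lia)) as B0.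
      pose proof (Hb (b+c+1, a+d+1) ltac:(unf; lia)) as B1.
      pose proof (Hb (c+1, d+1) ltac:(unf; lia)) as B2.
      apply (Hcase (LR a b) (LR3 a b) ltac:(unf; tauto) ltac:(unf; tauto) a 0 (a-1) a);
        [intros [x y] Hz; unf; lia | intros [x y] Hz; unf; lia |].
      intros [x1 y1] [x2 y2]. clear Hcase Hb HM HV HP. unf. lia.
Qed.

Theorem theorem5 (a b : Z) (hab : 0 < a <= b) :
  exists k : nat, is_cp_free a b (a + b + 1) k /\ (2 <= k <= 5)%nat.
Proof.
  assert (Hex : exists Ps, free_packing a b (a+b+1) Ps /\ (length Ps <= 4)%nat).
  { destruct (Z.eq_dec a b) as [e|ne].
    - exists (famA a b). split; [apply famA_packing; lia | simpl; lia].
    - destruct (Z_le_gt_dec b (2*a)).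
      + exists (famB a b). split; [apply famB_packing; lia | simpl; lia].
      + exists (famC a b). split; [apply famC_packing; lia | simpl; lia]. }
  destruct Hex as [Ps0 [HP0 HL0]].
  destruct (min_exists (fun k => exists Ps, free_packing a b (a+b+1) Ps /\ length Ps = k)
              (length Ps0) (ex_intro _ Ps0 (conj HP0 eq_refl))) as [k [[Ps [HPs HL]] Hmin]].
  exists k. split.
  - split.
    + exists Ps. split; assumption.
    + intros Ps' HPs'. apply Hmin. exists Ps'. split; [assumption|reflexivity].
  - split.
    + rewrite <- HL. apply (lower a b hab Ps HPs).
    + assert (k <= length Ps0)%nat by (apply Hmin; exists Ps0; split; [assumption|reflexivity]). lia.
Qed.
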